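(* Let $\mathcal{X}$ be a countable set and $\pi$ a probability distribution on $\mathcal{X}$. For $i=1,\dots,n$ let $S_i:\mathcal{X}\to\mathcal{X}$ be an involution ($S_i\circ S_i=\mathrm{id}$) which is $\pi$-invariant ($\pi(S_i(A))=\pi(A)$ for all $A\subset\mathcal{X}$), let $P_i$ be a Markov kernel on $\mathcal{X}$, and let $\omega=(\omega_1,\dots,\omega_n):\mathcal{X}\to\Delta^{n-1}$, where $\Delta^{n-1}=\{y\in\mathbb{R}^n: y_i\ge 0,\ \sum_{i=1}^n y_i=1\}$. Define the Markov kernel $\mathcal{K}(x,\cdot)=\sum_{i=1}^n\omega_i(x)P_i(x,\cdot)$. Suppose $\mathcal{K}$ satisfies the mixed skewed balance condition with respect to $\pi$, i.e. for all $x,x'\in\mathcal{X}$ and all $i\in\{1,\dots,n\}$, $$\omega_i(x)\,\pi(x)\,P_i(x,x')=\omega_i(x')\,\pi(x')\,P_i\big(S_i(x'),S_i(x)\big).$$ Then $\pi$ is invariant under $\mathcal{K}$, i.e. $\sum_{x\in\mathcal{X}}\pi(x)\mathcal{K}(x,x')=\pi(x')$ for all $x'\in\mathcal{X}$. *)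

(* Defs.v *)
From HB Require Import structures.
From mathcomp Require Import all_boot all_order all_algebra.
From mathcomp Require Import all_classical all_reals.
From mathcomp Require Import ereal esum.
Set Implicit Arguments. Unset Strict Implicit. Unset Printing Implicit Defensive.
Import Order.TTheory GRing.Theory Num.Theory.
Local Open Scope classical_set_scope.
Local Open Scope ring_scope.

Definition pmass (R : realType) (T : countType) (pi : T -> R) (A : set T) : \bar R :=
  \esum_(x in A) (pi x)%:E.

Definition is_prob (R : realType) (T : countType) (pi : T -> R) : Prop :=
  (forall x, 0 <= pi x) /\ pmass pi setT = 1%E.

Definition is_markov_kernel (R : realType) (T : countType) (P : T -> T -> R) : Prop :=
  forall x, is_prob (P x).

Definition in_simplex (R : realType) (n : nat) (y : 'I_n -> R) : Prop :=
  (forall i, 0 <= y i) /\ \sum_(i < n) y i = 1.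

Definition mix_kernel (R : realType) (T : countType) (n : nat)
  (omega : T -> 'I_n -> R) (P : 'I_n -> T -> T -> R) : T -> T -> R :=
  fun x x' => \sum_(i < n) omega x i * P i x x'.

(* Main.v *)
Require Import Defs.
From HB Require Import structures.
From mathcomp Require Import all_boot all_order all_algebra.
From mathcomp Require Import all_classical all_reals.
From mathcomp Require Import ereal esum.
Import Order.TTheory GRing.Theory Num.Theory.
Local Open Scope classical_set_scope.
Local Open Scope ring_scope.
Local Open Scope ereal_scope.
Lemma esumZl (R: realType) (T: choiceType) (S: set T) (a: T -> \bar R) (r : R) :
  (0 <= r)%R -> (forall x, 0 <= a x) ->
  \esum_(x in S) (r%:E * a x) = r%:E * \esum_(x in S) a x.
Proof.
move=> r0 a0; rewrite /esum -ereal_supZl //; last first.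
  by apply/set0P; exists 0; exists set0; [exact: fsets_set0 | rewrite fsbig_set0].
rewrite image_comp; congr ereal_sup; apply: eq_imagel => A [Afin AS] /=.
by rewrite !fsbig_finite // ge0_sume_distrr.
Qed.
Local Close Scope ereal_scope.

Theorem theorem4p1 (R : realType) (T : countType) (n : nat) (pi : T -> R)
  (S : 'I_n -> T -> T) (P : 'I_n -> T -> T -> R) (omega : T -> 'I_n -> R) :
  is_prob pi ->
  (forall i x, S i (S i x) = x) ->
  (forall i (A : set T), pmass pi (S i @` A) = pmass pi A) ->
  (forall i, is_markov_kernel (P i)) ->
  (forall x, in_simplex (omega x)) ->
  (forall (x x' : T) (i : 'I_n),
     omega x i * pi x * P i x x' = omega x' i * pi x' * P i (S i x') (S i x)) ->
  forall x' : T,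
    (\esum_(x in setT) (pi x * mix_kernel omega P x x')%:E = (pi x')%:E)%E.
Proof.
move=> [pi0 _] SS _ HP Hom Hb x'.
have P0 i x y : 0 <= P i x y by have [] := HP i x.
have om0 x i : 0 <= omega x i by have [] := Hom x.
transitivity (\esum_(x in setT) \sum_(i < n) (omega x i * pi x * P i x x')%:E)%E.
  apply: eq_esum => x _; rewrite /mix_kernel sumEFin mulr_sumr; congr (_%:E).
  by apply: eq_bigr => i _; rewrite mulrA (mulrC (pi x)).
rewrite esum_sum; last by move=> x i _ _; rewrite lee_fin !mulr_ge0.
transitivity (\sum_(i < n) (omega x' i * pi x')%:E)%E; last first.
  by rewrite sumEFin -mulr_suml; have [_ ->] := Hom x'; rewrite mul1r.
apply: eq_bigr => i _.
transitivity (\esum_(x in setT) ((omega x' i * pi x')%:E * (P i (S i x') (S i x))%:E))%E.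
  by apply: eq_esum => x _; rewrite Hb EFinM.
rewrite esumZl; last by move=> x; rewrite lee_fin.
  2: by rewrite mulr_ge0.
have bij : set_bij setT setT (S i).
  split; first by [].
    by move=> x y _ _ h; rewrite -(SS i x) h SS.
  by move=> y _; exists (S i y) => //; rewrite SS.
rewrite -(@reindex_esum _ _ _ _ _ _ (fun y => (P i (S i x') y)%:E) bij).
have [_ H1] := HP i (S i x'). rewrite /pmass in H1.
have -> : (\esum_(j in [set: T]) (P i (S i x') j)%:E)%E = 1%E by exact: H1.
by rewrite mule1.
Qed.
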